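(* Let $n\ge3$ and consider the path graph on $n$ nodes with Laplacian $L_n$. The path is reachable (observable) from a node $i\in\{2,\dots,n-1\}$ if and only if the matrices $N_{i-1}$ and $N_{n-i}$ have no common eigenvalue. Moreover, the eigenvalues common to these two matrices are exactly the unreachable (unobservable) eigenvalues of $L_n$ from node $i$.
   Context: The path graph on nodes $\{1,\dots,n\}$ has edges $\{i,i+1\}$; $L_n$ is tridiagonal with diagonal $(1,2,\dots,2,1)$ and off-diagonal $-1$. Reachable from node $i$ means the pair $(L_n,e_i)$ is reachable; observable means $(L_n,e_i^T)$ is observable. An unreachable (unobservable) eigenvalue from node $i$ is $\lambda$ such that some $v\ne0$ satisfies $L_nv=\lambda v$ and $(v)_i=0$. For $\nu\ge1$, $N_\nu\in\mathbb{R}^{\nu\times\nu}$ is the tridiagonal matrix with diagonal $(1,2,\dots,2)$ and off-diagonal entries $-1$. *)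

(* Defs.v *)
From HB Require Import structures.
From mathcomp Require Import all_boot all_order all_algebra.
From mathcomp Require Import reals.
Set Implicit Arguments. Unset Strict Implicit. Unset Printing Implicit Defensive.
Import Order.TTheory GRing.Theory Num.Theory.
Local Open Scope ring_scope.

(* Nodes 1..n of the paper are represented by 'I_n = {0,...,n-1}
   (paper node k corresponds to ordinal k-1). *)

Definition pathLap (R : nzRingType) (n : nat) : 'M[R]_n :=
  \matrix_(i < n, j < n)
    if i == j then (if (i == 0%N :> nat) || (i == n.-1 :> nat) then 1 else 2%:R)
    else if (i.+1 == j :> nat) || (j.+1 == i :> nat) then -1 else 0.

Definition Nmx (R : nzRingType) (nu : nat) : 'M[R]_nu :=
  \matrix_(i < nu, j < nu)
    if i == j then (if (i == 0%N :> nat) then 1 else 2%:R)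
    else if (i.+1 == j :> nat) || (j.+1 == i :> nat) then -1 else 0.

Definition ecol (R : nzRingType) (n : nat) (i : 'I_n) : 'cV[R]_n := delta_mx i 0.

Definition ctrb_mx (R : nzRingType) (n : nat) (A : 'M[R]_n) (b : 'cV[R]_n)
  : 'M[R]_n := \matrix_(i < n, j < n) (A ^+ j *m b) i 0.

Definition obsv_mx (R : nzRingType) (n : nat) (A : 'M[R]_n) (c : 'rV[R]_n)
  : 'M[R]_n := \matrix_(i < n, j < n) (c *m A ^+ i) 0 j.

Definition reachable (R : fieldType) (n : nat) (A : 'M[R]_n) (b : 'cV[R]_n) :=
  \rank (ctrb_mx A b) = n.

Definition observable (R : fieldType) (n : nat) (A : 'M[R]_n) (c : 'rV[R]_n) :=
  \rank (obsv_mx A c) = n.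

Definition unreachable_eig (R : nzRingType) (n : nat) (i : 'I_n) (lam : R) :=
  exists v : 'cV[R]_n, [/\ v != 0, pathLap R n *m v = lam *: v & v i 0 = 0].

Definition unobservable_eig (R : nzRingType) (n : nat) (i : 'I_n) (lam : R) :=
  exists v : 'cV[R]_n, [/\ v != 0, pathLap R n *m v = lam *: v & v i 0 = 0].

Definition is_eig (R : fieldType) (m : nat) (A : 'M[R]_m) (lam : R) :=
  eigenvalue A lam.

(* Main.v *)
Require Import Defs.
From HB Require Import structures.
From mathcomp Require Import all_boot all_order all_algebra.
From mathcomp Require Import reals complex.
From mathcomp Require Import zify ring lra.
Import Order.TTheory GRing.Theory Num.Theory.
Set Implicit Arguments. Unset Strict Implicit. Unset Printing Implicit Defensive.
Local Open Scope ring_scope.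

Section Seq.
Variable R : nzRingType.

Definition sq n (v : 'cV[R]_n) (k : nat) : R := \sum_(j < n | j == k :> nat) v j 0.

Lemma sqE n (v : 'cV[R]_n) (j : 'I_n) : sq v j = v j 0.
Proof. by rewrite /sq (big_pred1 j) // => k; rewrite inE. Qed.

Lemma sq_out n (v : 'cV[R]_n) k : (n <= k)%N -> sq v k = 0.
Proof.
move=> h; rewrite /sq big_pred0 // => j; apply/negbTE; apply/eqP => e.
by have := ltn_ord j; rewrite e ltnNge h.
Qed.

Lemma sq_col n (s : nat -> R) k : (forall k, (n <= k)%N -> s k = 0) ->
  sq (\col_(j < n) s j) k = s k.
Proof.
move=> hs; case: (ltnP k n) => hk.
  by rewrite (sqE _ (Ordinal hk)) mxE.
by rewrite sq_out // hs.
Qed.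

Lemma sq_inj n (v w : 'cV[R]_n) : (forall k, sq v k = sq w k) -> v = w.
Proof. by move=> h; apply/matrixP => j z; rewrite ord1 -!sqE h. Qed.

Lemma sq_sum n (v : 'cV[R]_n) k :
  sq v k = \sum_(j < n) (if j == k :> nat then v j 0 else 0).
Proof. by rewrite /sq big_mkcond. Qed.

Definition sp n (v : 'cV[R]_n) k := if k is k'.+1 then sq v k' else 0.

Lemma sum_sel n (v : 'cV[R]_n) (P : nat -> bool) :
  \sum_(j < n) (if P j then v j 0 else 0) = \sum_(j < n | P j) v j 0.
Proof. by rewrite [RHS]big_mkcond. Qed.

Lemma tri_row n (d : nat -> R) (v : 'cV[R]_n) (r : 'I_n) :
  ((\matrix_(a < n, b < n) if a == b then d a
      else if (a.+1 == b :> nat) || (b.+1 == a :> nat) then -1 else 0) *m v) r 0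
  = d r * sq v r - sq v r.+1 - sp v r.
Proof.
rewrite mxE.
have -> : sp v r = \sum_(j < n) (if j.+1 == r :> nat then v j 0 else 0).
  rewrite -big_mkcond /=; case: (nat_of_ord r) => [|k] /=.
    by rewrite big_pred0.
  by rewrite /sq; apply: eq_bigl => j; rewrite eqSS.
rewrite !sq_sum mulr_sumr -!sumrB; apply: eq_bigr => j _; rewrite !mxE.
have [->|hne] := eqVneq j r.
  by rewrite eqxx !ifF ?subr0 //; apply/eqP; lia.
have hne' : (j == r :> nat) = false by apply/negbTE.
rewrite hne' mulr0 sub0r.
case: (eqVneq (j : nat) r.+1) => [e|e1].
  rewrite e /= ifF ?subr0 ?mulN1r //; apply/eqP; lia.
rewrite /=; case: (eqVneq (j.+1 : nat) r) => [e|e2].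
  by rewrite mulN1r oppr0 sub0r.
by rewrite mul0r !oppr0 addr0.
Qed.

End Seq.
Section NatSeq.
Variable R : comNzRingType.

Definition dL n (k : nat) : R := if (k == 0)%N || (k == n.-1) then 1 else 2%:R.
Definition dN (k : nat) : R := if (k == 0)%N then 1 else 2%:R.
Definition spn (s : nat -> R) k := if k is k'.+1 then s k' else 0.
Definition Leq n (s : nat -> R) lam := forall r, (r < n)%N ->
  dL n r * s r - s r.+1 - spn s r = lam * s r.
Definition Neq n (s : nat -> R) lam := forall r, (r < n)%N ->
  dN r * s r - s r.+1 - spn s r = lam * s r.
Definition supp n (s : nat -> R) := forall k, (n <= k)%N -> s k = 0.

Lemma Neq_prop nu (s : nat -> R) lam : supp nu s -> Neq nu s lam ->
  s nu.-1 = 0 -> forall k, s k = 0.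
Proof.
move=> hs he hl.
have Q : forall m k, (nu.-1 - m <= k)%N -> s k = 0.
  elim=> [|m IH] k hk.
    case: (ltngtP k nu.-1) => h; first lia.
      by apply: hs; lia.
    by rewrite h.
  case: (leqP (nu.-1 - m) k) => h; first by apply: IH.
  have e : k = (nu.-1 - m).-1 by lia.
  have hr : (0 < nu.-1 - m)%N by lia.
  move: (he (nu.-1 - m)%N ltac:(lia)).
  rewrite (IH _ (leqnn _)) (IH (nu.-1 - m)%N.+1 ltac:(lia)).
  rewrite /spn; case E: (nu.-1 - m)%N => [|r]; first lia.
  rewrite mulr0 subr0 sub0r mulr0 => /eqP; rewrite oppr_eq0 => /eqP.
  by rewrite e E.
by move=> k; apply: (Q nu.-1); lia.
Qed.


Definition glue a n (sx sy : nat -> R) c1 c2 (k : nat) : R :=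
  if (k < a)%N then c1 * sx k else if k == a then 0
  else if (k < n)%N then c2 * sy (n.-1 - k)%N else 0.

Lemma glue_supp a n sx sy c1 c2 : (a < n)%N -> supp n (glue a n sx sy c1 c2).
Proof. by move=> h k hk; rewrite /glue ifF; [rewrite ifF ?ifF //|]; apply/negbTE; lia. Qed.

Lemma glue_Leq a b n (sx sy : nat -> R) lam : n = (a + 1 + b)%N -> (1 <= a)%N -> (1 <= b)%N ->
  supp a sx -> supp b sy -> Neq a sx lam -> Neq b sy lam ->
  Leq n (glue a n sx sy (sy b.-1) (- sx a.-1)) lam.
Proof.
move=> hn ha hb hsx hsy hx hy r hr.
set c1 := sy b.-1; set c2 := - sx a.-1; set s := glue _ _ _ _ _ _.
case: (ltngtP r a) => hra.
- have e0 : s r = c1 * sx r by rewrite /s /glue hra.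
  have e1 : s r.+1 = c1 * sx r.+1.
    rewrite /s /glue; case: (ltnP r.+1 a) => h //.
    have -> : r.+1 = a by lia.
    by rewrite eqxx hsx // mulr0.
  have ep : spn s r = c1 * spn sx r.
    case: r hr hra {e0 e1} => [|k] hr hra /=; first by rewrite mulr0.
    by rewrite /s /glue ifT //; lia.
  have ed : dL n r = dN r.
    by rewrite /dL /dN; case: (r == 0)%N => //=; rewrite ifF //; apply/negbTE; lia.
  rewrite e0 e1 ep ed.
  transitivity (c1 * (dN r * sx r - sx r.+1 - spn sx r)); first ring.
  by rewrite hx //; ring.
- have m := (n.-1 - r)%N.
  have e0 : s r = c2 * sy (n.-1 - r)%N.
    rewrite /s /glue ifF; last by apply/negbTE; lia.
    rewrite ifF; last by apply/negbTE; lia.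
    by rewrite ifT //; lia.
  have e1 : s r.+1 = c2 * spn sy (n.-1 - r)%N.
    rewrite /s /glue ifF; last by apply/negbTE; lia.
    rewrite ifF; last by apply/negbTE; lia.
    case: (ltnP r.+1 n) => h.
      case E: (n.-1 - r)%N => [|k]; first lia.
      by rewrite /=; congr (_ * sy _); lia.
    have -> : (n.-1 - r)%N = 0%N by lia.
    by rewrite /= mulr0.
  have ep : spn s r = c2 * sy (n.-1 - r).+1.
    case: r hr hra {e0 e1} => [|k] hr hra /=; first lia.
    rewrite /s /glue ifF; last by apply/negbTE; lia.
    case: (eqVneq k a) => h.
      by rewrite hsy ?mulr0 //; lia.
    by rewrite ifT; [congr (_ * sy _)|]; lia.
  have ed : dL n r = dN (n.-1 - r).
    rewrite /dL /dN (_ : (r == 0)%N = false) /=; last by apply/negbTE; lia.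
    have -> : (n.-1 - r == 0)%N = (r == n.-1) by apply/idP/idP => /eqP h; apply/eqP; lia.
    by [].
  rewrite e0 e1 ep ed.
  transitivity (c2 * (dN (n.-1 - r)%N * sy (n.-1 - r)%N - sy (n.-1 - r)%N.+1 - spn sy (n.-1 - r)%N));
    first ring.
  by rewrite hy; [ring|lia].
- have e0 : s r = 0 by rewrite /s /glue hra ltnn eqxx.
  have e1 : s r.+1 = c2 * c1.
    rewrite /s /glue ifF; last by apply/negbTE; lia.
    rewrite ifF; last by apply/negbTE; lia.
    by rewrite ifT; [rewrite /c1; congr (_ * sy _)|]; lia.
  have ep : spn s r = c1 * sx a.-1.
    case: r hr hra {e0 e1} => [|k] hr hra /=; first lia.
    by rewrite /s /glue ifT; [congr (_ * sx _)|]; lia.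
  rewrite e0 e1 ep /c2; ring.
Qed.


Definition lft a (s : nat -> R) k := if (k < a)%N then s k else 0.
Definition rgt b n (s : nat -> R) m := if (m < b)%N then s (n.-1 - m)%N else 0.

Section Split.
Variables (a b n : nat) (s : nat -> R) (lam : R).
Hypotheses (hn : n = (a + 1 + b)%N) (ha : (1 <= a)%N) (hb : (1 <= b)%N)
  (hs : supp n s) (he : Leq n s lam) (hsa : s a = 0).

Lemma lft_supp : supp a (lft a s).
Proof. by move=> k hk; rewrite /lft ifF //; apply/negbTE; lia. Qed.
Lemma rgt_supp : supp b (rgt b n s).
Proof. by move=> k hk; rewrite /rgt ifF //; apply/negbTE; lia. Qed.

Lemma lft_Neq : Neq a (lft a s) lam.
Proof.
move=> r hr; have := @he r ltac:(lia).
have ed : dL n r = dN r.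
  by rewrite /dL /dN; case: (r == 0)%N => //=; rewrite ifF //; apply/negbTE; lia.
have e1 : lft a s r.+1 = s r.+1.
  rewrite /lft; case: (ltnP r.+1 a) => h //.
  by have -> : r.+1 = a by lia.
have ep : spn (lft a s) r = spn s r.
  by case: r hr {e1 ed} => [|k] hr //=; rewrite /lft ifT //; lia.
by rewrite ed e1 ep /lft hr.
Qed.

Lemma rgt_Neq : Neq b (rgt b n s) lam.
Proof.
move=> m hm; have := @he (n.-1 - m)%N ltac:(lia).
have ed : dL n (n.-1 - m)%N = dN m.
  rewrite /dL /dN (_ : ((n.-1 - m) == 0)%N = false) /=; last by apply/negbTE; lia.
  have -> : (n.-1 - m == n.-1)%N = (m == 0)%N by apply/idP/idP => /eqP h; apply/eqP; lia.
  by [].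
have e1 : s (n.-1 - m)%N.+1 = spn (rgt b n s) m.
  case: m hm {ed} => [|k] hm /=; first by rewrite hs //; lia.
  by rewrite /rgt ifT; [congr s|]; lia.
have ep : spn s (n.-1 - m)%N = rgt b n s m.+1.
  case E: (n.-1 - m)%N => [|k] /=; first lia.
  rewrite /rgt; case: (ltnP m.+1 b) => h; first by congr s; lia.
  by have -> : k = a by lia.
rewrite ed e1 ep => H.
have -> : rgt b n s m = s (n.-1 - m)%N by rewrite /rgt hm.
rewrite -H; ring.
Qed.

Lemma lft_zero : (forall k, lft a s k = 0) -> forall k, s k = 0.
Proof.
move=> hl.
have h1 : s a.-1 = 0 by have := hl a.-1; rewrite /lft ifT //; lia.
have h2 : s a.+1 = 0.
  have H := @he a ltac:(lia); rewrite hsa !mulr0 in H.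
  have Hsp : spn s a = 0 by case E: a => [|k] //=; move: h1; rewrite E.
  rewrite Hsp subr0 sub0r in H.
  by move/eqP: H; rewrite oppr_eq0 => /eqP.
have hr := Neq_prop rgt_supp rgt_Neq.
have hr0 : forall k, rgt b n s k = 0.
  apply: hr; rewrite /rgt ifT; last lia.
  by rewrite -h2; congr s; lia.
move=> k; case: (ltnP k a) => h1'.
  by have := hl k; rewrite /lft h1'.
case: (eqVneq k a) => [->//|h2'].
case: (ltnP k n) => h3; last by apply: hs.
by have := hr0 (n.-1 - k)%N; rewrite /rgt ifT; [have -> : (n.-1 - (n.-1 - k))%N = k by lia|lia].
Qed.

Lemma rgt_zero : (forall k, rgt b n s k = 0) -> forall k, s k = 0.
Proof.
move=> hl.
have h2 : s a.+1 = 0.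
  by have := hl b.-1; rewrite /rgt ifT; [have -> : (n.-1 - b.-1)%N = a.+1 by lia|lia].
have h1 : s a.-1 = 0.
  have H := @he a ltac:(lia); rewrite hsa !mulr0 h2 subr0 sub0r in H.
  case E: a H => [|k] //=; first lia.
  by move/eqP; rewrite oppr_eq0 => /eqP.
apply: lft_zero; apply: (Neq_prop lft_supp lft_Neq).
by rewrite /lft ifT //; lia.
Qed.

End Split.

End NatSeq.
Section Mat.
Variable R : fieldType.

Lemma pathLap_row n (v : 'cV[R]_n) (r : 'I_n) :
  (pathLap R n *m v) r 0 = dL R n r * sq v r - sq v r.+1 - spn (sq v) r.
Proof. exact: (tri_row (dL R n) v r). Qed.

Lemma Nmx_row n (v : 'cV[R]_n) (r : 'I_n) :
  (Nmx R n *m v) r 0 = dN R r * sq v r - sq v r.+1 - spn (sq v) r.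
Proof. exact: (tri_row (dN R) v r). Qed.

Lemma sq_supp n (v : 'cV[R]_n) : supp n (sq v).
Proof. by move=> k hk; rewrite sq_out. Qed.

Lemma eigL n (v : 'cV[R]_n) lam : pathLap R n *m v = lam *: v <-> Leq n (sq v) lam.
Proof.
split.
  move=> h r hr; have := congr1 (fun M : 'cV_n => M (Ordinal hr) 0) h.
  by rewrite /= pathLap_row mxE sqE.
move=> h; apply/matrixP => r z; rewrite ord1 pathLap_row mxE -sqE.
exact: h (ltn_ord r).
Qed.

Lemma eigN n (v : 'cV[R]_n) lam : Nmx R n *m v = lam *: v <-> Neq n (sq v) lam.
Proof.
split.
  move=> h r hr; have := congr1 (fun M : 'cV_n => M (Ordinal hr) 0) h.
  by rewrite /= Nmx_row mxE sqE.
move=> h; apply/matrixP => r z; rewrite ord1 Nmx_row mxE -sqE.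
exact: h (ltn_ord r).
Qed.

Lemma sq_eq0 n (v : 'cV[R]_n) : (forall k, sq v k = 0) -> v = 0.
Proof. by move=> h; apply: sq_inj => k; rewrite h /sq big1 // => j _; rewrite mxE. Qed.

End Mat.

Section Part3.
Variable R : fieldType.

Lemma sq0 n k : sq (0 : 'cV[R]_n) k = 0.
Proof. by rewrite /sq big1 // => j _; rewrite mxE. Qed.

Lemma Leq_ext n (s1 s2 : nat -> R) lam : s1 =1 s2 -> Leq n s1 lam -> Leq n s2 lam.
Proof.
move=> e h r hr; have := @h r hr; rewrite !e.
by have -> : spn s1 r = spn s2 r by case: r {hr} => [|r] //=; rewrite e.
Qed.

Lemma Neq_ext n (s1 s2 : nat -> R) lam : s1 =1 s2 -> Neq n s1 lam -> Neq n s2 lam.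
Proof.
move=> e h r hr; have := @h r hr; rewrite !e.
by have -> : spn s1 r = spn s2 r by case: r {hr} => [|r] //=; rewrite e.
Qed.

Lemma part3 n (i : 'I_n) lam : (1 <= i)%N -> (i <= n - 2)%N ->
  ((exists2 x : 'cV[R]_i, x != 0 & Nmx R i *m x = lam *: x) /\
   (exists2 y : 'cV[R]_(n - 1 - i), y != 0 & Nmx R (n - 1 - i) *m y = lam *: y))
  <-> unreachable_eig i lam.
Proof.
move=> h1 h2.
have hin := ltn_ord i.
have hn : n = (i + 1 + (n - 1 - i))%N by lia.
have hb : (1 <= n - 1 - i)%N by lia.
split.
- case=> [[x xnz hx] [y ynz hy]].
  move/eigN: hx => hx; move/eigN: hy => hy.
  have hxl : sq x (nat_of_ord i).-1 != 0.
    apply/eqP => h0; suff hz : x = 0 by rewrite hz eqxx in xnz. apply: sq_eq0.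
    exact: Neq_prop (@sq_supp _ _ x) hx h0.
  have hyl : sq y (n - 1 - i).-1 != 0.
    apply/eqP => h0; suff hz : y = 0 by rewrite hz eqxx in ynz. apply: sq_eq0.
    exact: Neq_prop (@sq_supp _ _ y) hy h0.
  set s := glue i n (sq x) (sq y) (sq y (n - 1 - i).-1) (- sq x (nat_of_ord i).-1).
  have hsq : forall k, sq (\col_(k < n) s k) k = s k.
    by move=> k; apply: sq_col; apply: glue_supp.
  exists (\col_(k < n) s k); split.
  + apply/negP => /eqP h0; have := hsq (nat_of_ord i).-1.
    rewrite h0 sq0 /s /glue ifT; last lia.
    by move/esym/eqP; rewrite mulf_eq0 (negbTE hyl) (negbTE hxl).
  + apply/eigL; apply: (Leq_ext (s1 := s)) => [k|]; first by rewrite hsq.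
    exact: glue_Leq hn h1 hb (@sq_supp _ _ x) (@sq_supp _ _ y) hx hy.
  + by rewrite -sqE hsq /s /glue ltnn eqxx.
- case=> v [vnz hv hvi]; move/eigL: hv => hv.
  have hsa : sq v i = 0 by rewrite sqE.
  split.
  + exists (\col_(k < i) lft i (sq v) k).
      apply/negP => /eqP h0; suff hz : v = 0 by rewrite hz eqxx in vnz. apply: sq_eq0.
      apply: (lft_zero hn h1 hb (@sq_supp _ _ v) hv hsa) => k.
      have := sq_col k (lft_supp (sq v) hn h1 hb).
      by rewrite h0 sq0.
    apply/eigN; apply: (Neq_ext (s1 := lft i (sq v))) => [k|].
      by rewrite sq_col //; apply: (lft_supp (sq v) hn h1 hb).
    exact: (lft_Neq hn h1 hb hv hsa).
  + exists (\col_(k < n - 1 - i) rgt (n - 1 - i) n (sq v) k).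
      apply/negP => /eqP h0; suff hz : v = 0 by rewrite hz eqxx in vnz. apply: sq_eq0.
      apply: (rgt_zero hn h1 hb (@sq_supp _ _ v) hv hsa) => k.
      have := sq_col k (rgt_supp (sq v) hn h1 hb).
      by rewrite h0 sq0.
    apply/eigN; apply: (Neq_ext (s1 := rgt (n - 1 - i) n (sq v))) => [k|].
      by rewrite sq_col //; apply: (rgt_supp (sq v) hn h1 hb).
    exact: (rgt_Neq hn h1 hb (@sq_supp _ _ v) hv hsa).
Qed.

End Part3.
Lemma herm_eig_real (C : numClosedFieldType) n (A : 'M[C]_n) (x : 'rV_n) z :
  A^T = A -> map_mx Num.conj A = A -> x != 0 -> x *m A = z *: x -> z \is Num.real.
Proof.
move=> hT hc xnz hx.
set xc := map_mx Num.conj x.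
have key : forall M : 'M[C]_n, M^T = M -> map_mx Num.conj M = M ->
    ((x *m M *m xc^T) 0 0)^* = (x *m M *m xc^T) 0 0.
  move=> M hMT hMc.
  have -> : ((x *m M *m xc^T) 0 0)^* = (map_mx Num.conj (x *m M *m xc^T)) 0 0.
    by rewrite [RHS]mxE.
  rewrite !map_mxM hMc.
  have -> : map_mx Num.conj xc^T = x^T.
    by apply/matrixP => i j; rewrite !mxE conjCK.
  have -> : (xc *m M *m x^T) 0 0 = ((xc *m M *m x^T)^T) 0 0 by rewrite [RHS]mxE.
  by rewrite !trmx_mul trmxK hMT mulmxA.
have hq := key 1%:M (trmx1 _ _) (map_mx1 _ _).
rewrite mulmx1 in hq.
have hs := key A hT hc.
rewrite hx -scalemxAl mxE in hs.
set q := (x *m xc^T) 0 0 in hq hs.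
have q0 : q != 0.
  apply/eqP => h0; move/eqP: xnz; apply; apply/matrixP => i j.
  rewrite ord1 mxE.
  have hq' : q = \sum_k `|x 0 k| ^+ 2.
    by rewrite /q mxE; apply: eq_bigr => k _; rewrite normCK !mxE.
  have hsum : \sum_(k | predT k) `|x 0 k| ^+ 2 = 0 by rewrite -hq'.
  have := psumr_eq0P (fun k _ => exprn_ge0 2 (normr_ge0 (x 0 k))) hsum (i:=j) isT.
  move/eqP.
  by rewrite expf_eq0 /= normr_eq0 => /eqP.
rewrite CrealE; apply/eqP; apply: (mulIf q0).
by rewrite -hs rmorphM; congr (_ * _); exact: esym hq.
Qed.

Lemma sym_real_root (R : rcfType) n (A : 'M[R]_n) (p : {poly R}) :
  A^T = A -> p %| char_poly A -> (1 < size p)%N -> exists r, root p r.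
Proof.
move=> hT hd hs.
pose f := real_complex R.
pose pc := map_poly f p.
have [z hz] : exists z, root pc z.
  by apply/closed_rootP; rewrite size_map_poly; case: (size p) hs => // [[]].
have hc : root (char_poly (map_mx f A)) z.
  by rewrite -map_char_poly; apply: root_dvdp hz; rewrite dvdp_map.
move: hc; rewrite -eigenvalue_root_char => /eigenvalueP [x hx xnz].
have zr : z \is Num.real.
  apply: (herm_eig_real _ _ xnz hx).
    by apply/matrixP => i j; rewrite !mxE; congr (f _); rewrite -{1}hT mxE.
  by apply/matrixP => i j; rewrite !mxE conj_Creal // complex_real.
move: zr hz {hx}; case: z => a b; rewrite complex_real => /eqP -> hz.
exists a.
move: hz; rewrite /root (_ : (a +i* 0)%C = f a) // horner_map.
by rewrite fmorph_eq0.
Qed.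

Lemma krylov_eig (R : rcfType) n' (A : 'M[R]_n'.+1) (u : 'cV_n'.+1) (i : 'I_n'.+1) :
  A^T = A -> u != 0 -> (forall j, (j < n'.+1)%N -> (A ^+ j *m u) i 0 = 0) ->
  exists lam, exists2 v : 'cV_n'.+1, v != 0 & (A *m v = lam *: v /\ v i 0 = 0).
Proof.
move=> hT unz hu.
have hexp : forall f : {poly R}, (size f <= n'.+1)%N -> (horner_mx A f *m u) i 0 = 0.
  move=> f hf; rewrite -[f]coefK poly_def rmorph_sum /= mulmx_suml summxE big1 // => k _.
  rewrite linearZ /= rmorphXn /= horner_mx_X -scalemxAl mxE hu ?mulr0 //.
  exact: leq_trans (ltn_ord k) hf.
have hch0 : char_poly A != 0 by rewrite -size_poly_eq0 size_char_poly.
suff: forall N (p : {poly R}), (size p <= N)%N -> p %| char_poly A -> p != 0 ->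
    horner_mx A p *m u = 0 ->
    exists lam, exists2 v : 'cV_n'.+1, v != 0 & (A *m v = lam *: v /\ v i 0 = 0).
  move/(_ n'.+2 (char_poly A)); apply; rewrite ?size_char_poly ?dvdpp //.
  by rewrite Cayley_Hamilton mul0mx.
elim=> [|N IH] p hs hd hp0 hpu.
  by move: hs; rewrite leqn0 size_poly_eq0 (negbTE hp0).
case: (leqP (size p) 1) => hs1.
  move: hpu; rewrite [p]size1_polyC // horner_mx_C mul_scalar_mx => /eqP.
  rewrite scalemx_eq0 (negbTE unz) orbF => /eqP hc.
  by move: hp0; rewrite [p]size1_polyC // hc eqxx.
have [r hr] := sym_real_root hT hd hs1.
move/factor_theorem: hr => [f ef].
have hf0 : f != 0 by apply/eqP => e; move: hp0; rewrite ef e mul0r eqxx.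
have hsp : size p = (size f).+1.
  by rewrite ef size_mul ?polyXsubC_eq0 // size_XsubC addn2.
have hfd : f %| char_poly A.
  by apply: dvdp_trans hd; rewrite ef dvdp_mulIl.
case: (eqVneq (horner_mx A f *m u) 0) => hv.
  by apply: (IH f) => //; rewrite -ltnS -hsp.
exists r, (horner_mx A f *m u) => //; split.
  move: hpu; rewrite ef mulrC rmorphM /= rmorphB /= horner_mx_X horner_mx_C.
  rewrite -[(A - r%:M) * _]/((A - r%:M) *m _) -mulmxA mulmxBl => /eqP; rewrite subr_eq0 => /eqP ->.
  by rewrite mul_scalar_mx.
apply: hexp; rewrite -ltnS -hsp -(size_char_poly A).
exact: dvdp_leq hch0 hd.
Qed.

Section Final.
Variable R : realType.

Lemma pathLap_sym n : (pathLap R n)^T = pathLap R n.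
Proof.
apply/matrixP => a b; rewrite !mxE.
case: (eqVneq a b) => [->//|hab]; by rewrite orbC.
Qed.

Lemma Nmx_sym n : (Nmx R n)^T = Nmx R n.
Proof.
apply/matrixP => a b; rewrite !mxE.
case: (eqVneq a b) => [->//|hab]; by rewrite orbC.
Qed.

Lemma pow_sym n' (A : 'M[R]_n'.+1) k : A^T = A -> (A ^+ k)^T = A ^+ k.
Proof.
move=> hT; elim: k => [|k IH]; first by rewrite expr0 trmx1.
rewrite exprS -[A * _]/(A *m _) trmx_mul IH hT.
by rewrite -[_ *m A]/(_ * A) -exprSr -[A *m _]/(A * _) -exprS.
Qed.

Lemma pow_eig n' (A : 'M[R]_n'.+1) (v : 'cV[R]_n'.+1) lam k : A *m v = lam *: v -> A ^+ k *m v = lam ^+ k *: v.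
Proof.
move=> h; elim: k => [|k IH]; first by rewrite expr0 mul1mx scale1r.
by rewrite exprSr -[A ^+ k * A]/(A ^+ k *m A) -mulmxA h -scalemxAr IH scalerA exprS.
Qed.

Lemma ctrbE n (A : 'M[R]_n) (i : 'I_n) k j : ctrb_mx A (ecol R i) k j = (A ^+ j) k i.
Proof. by rewrite mxE /ecol -colE mxE. Qed.

Lemma eig_col m (lam : R) : is_eig (Nmx R m) lam <->
  exists2 x : 'cV[R]_m, x != 0 & Nmx R m *m x = lam *: x.
Proof.
rewrite /is_eig; split.
  move/eigenvalueP => [v hv vnz]; exists v^T.
    by apply: contra vnz => /eqP h; rewrite -[v]trmxK h trmx0.
  by rewrite -{1}Nmx_sym -trmx_mul hv linearZ.
move=> [x xnz hx]; apply/eigenvalueP; exists x^T.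
  by rewrite -{1}Nmx_sym -trmx_mul hx linearZ.
by apply: contra xnz => /eqP h; rewrite -[x]trmxK h trmx0.
Qed.

Lemma reach_iff n' (i : 'I_n'.+1) (P : Prop) :
  (P <-> exists lam : R, unreachable_eig i lam) ->
  (reachable (pathLap R n'.+1) (ecol R i) <-> ~ P).
Proof.
move=> hP; set L := pathLap R n'.+1; set C := ctrb_mx L (ecol R i).
have hLT : L^T = L := pathLap_sym _.
split.
  move=> hr /hP [lam [v [vnz hv hvi]]].
  have hu : C \in unitmx by rewrite -row_free_unit /row_free hr.
  have hw : v^T *m C = 0.
    apply/matrixP => a j; rewrite ord1 !mxE.
    transitivity ((L ^+ j *m v) i 0).
      rewrite mxE; apply: eq_bigr => k _.
      have hsym : forall a b, (L ^+ j) a b = (L ^+ j) b a.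
        by move=> a' b'; rewrite -{1}(pow_sym j hLT) mxE.
      by rewrite ctrbE !mxE mulrC hsym.
    by rewrite (pow_eig _ hv) mxE hvi mulr0.
  have : v^T = 0 by rewrite -[v^T]mulmx1 -(mulmxV hu) mulmxA hw mul0mx.
  by move/(congr1 trmx); rewrite trmxK trmx0 => h; rewrite h eqxx in vnz.
move=> hnP; case: (eqVneq (\rank C) n'.+1) => // hne; exfalso; apply: hnP.
apply/hP.
have : \det C == 0.
  have hC : (C \in unitmx) = false by rewrite -row_free_unit /row_free (negbTE hne).
  by move: hC; rewrite unitmxE unitfE => /negbFE.
move/det0P => [w wnz hw].
have [lam [v vnz [hv hvi]]] : exists lam, exists2 v : 'cV_n'.+1, v != 0 & (L *m v = lam *: v /\ v i 0 = 0).
  apply: (krylov_eig (u := w^T)) => //.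
    by apply: contra wnz => /eqP h; rewrite -[w]trmxK h trmx0.
  move=> j hj.
  have := congr1 (fun M : 'rV_n'.+1 => M 0 (Ordinal hj)) hw; rewrite /= !mxE => hh.
  rewrite -[RHS]hh; apply: eq_bigr => k _.

  have hsym : forall a b, (L ^+ j) a b = (L ^+ j) b a.
    by move=> a' b'; rewrite -{1}(pow_sym j hLT) mxE.
  by rewrite /C ctrbE mxE mulrC hsym.
by exists lam, v.
Qed.

Lemma obsv_ctrb n' (i : 'I_n'.+1) :
  obsv_mx (pathLap R n'.+1) (ecol R i)^T = (ctrb_mx (pathLap R n'.+1) (ecol R i))^T.
Proof.
apply/matrixP => a b; rewrite [LHS]mxE [RHS]mxE ctrbE /ecol trmx_delta -rowE mxE.
by rewrite -{1}(pow_sym a (pathLap_sym n'.+1)) mxE.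
Qed.

End Final.

Theorem mainTheorem6 (R : realType) (n : nat) (i : 'I_n) :
  (3 <= n)%N -> (1 <= i)%N -> (i <= n - 2)%N ->
  (reachable (pathLap R n) (ecol R i) <->
     ~ (exists lam : R, is_eig (Nmx R i) lam /\ is_eig (Nmx R (n - 1 - i)) lam)) /\
  (observable (pathLap R n) (ecol R i)^T <->
     ~ (exists lam : R, is_eig (Nmx R i) lam /\ is_eig (Nmx R (n - 1 - i)) lam)) /\
  (forall lam : R,
     (is_eig (Nmx R i) lam /\ is_eig (Nmx R (n - 1 - i)) lam) <->
       unreachable_eig i lam) /\
  (forall lam : R,
     (is_eig (Nmx R i) lam /\ is_eig (Nmx R (n - 1 - i)) lam) <->
       unobservable_eig i lam).
Proof.
move=> h3 h1 h2.
have p3 : forall lam : R,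
    (is_eig (Nmx R i) lam /\ is_eig (Nmx R (n - 1 - i)) lam) <-> unreachable_eig i lam.
  move=> lam; rewrite eig_col eig_col; exact: part3.
have hP : (exists lam : R, is_eig (Nmx R i) lam /\ is_eig (Nmx R (n - 1 - i)) lam) <->
    exists lam : R, unreachable_eig i lam.
  by split => -[lam h]; exists lam; apply/p3.
move: i h3 h1 h2 p3 hP; case: n => [|n'] i h3 h1 h2 p3 hP; first by case: i h1 h2 p3 hP.
have hr := reach_iff hP.
split; first exact: hr.
split; last by split.
by rewrite /observable obsv_ctrb mxrank_tr.
Qed.
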